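(* Let $f$ be a nonzero real homogeneous polynomial of degree $p\ge1$ in $n$ variables. (a) If $f(x)=a(c^\top x)^p$ for some $c\in\mathbb R^n\setminus\{0\}$ and $a\ne0$, then $\|f^k\|_{HS}=\|f^k\|_\sigma=|a|^k\|c\|_2^{kp}$ for all $k\in\mathbb N$. (b) If $f$ is not of this form, then for all $k,l\in\mathbb N$: $\|f^{k+l}\|_{HS}<\|f^k\|_{HS}\|f^l\|_{HS}$, $\|f^{2k}\|_{HS}<\|f^k\|_{HS}^2$, and $\|f\|_\sigma^k<\|f^k\|_{HS}$. Moreover the limit $\rho_1(f):=\lim_{k\to\infty}\|f^k\|_{HS}^{1/k}$ exists, $\rho_1(f)\ge\|f\|_\sigma$, and $\rho_1(f)<\|f^k\|_{HS}^{1/k}$ for every $k\in\mathbb N$.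
   Context: Every real homogeneous polynomial $f$ of degree $p$ in $n$ variables is $f(x)=\langle\mathcal F,\otimes^p x\rangle$ for a unique symmetric tensor $\mathcal F\in\mathrm S^p\mathbb R^n$, where $\langle\cdot,\cdot\rangle$ is the entrywise (Hilbert–Schmidt) inner product of tensors and $\otimes^p x=x\otimes\cdots\otimes x$. Set $\|f\|_{HS}:=\|\mathcal F\|_{HS}=\sqrt{\langle\mathcal F,\mathcal F\rangle}$; equivalently, if $f(x)=\sum_{j_1+\cdots+j_n=p}\frac{p!}{j_1!\cdots j_n!}\phi_{j_1,\dots,j_n}x_1^{j_1}\cdots x_n^{j_n}$ then $\|f\|_{HS}^2=\sum\frac{p!}{j_1!\cdots j_n!}\phi_{j_1,\dots,j_n}^2$. Also $\|f\|_\sigma:=\max\{|f(x)|:x\in\mathbb R^n,\|x\|_2=1\}$. Powers $f^k$ are ordinary powers of polynomials. *)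

(* Defs.v *)
From HB Require Import structures.
From mathcomp Require Import all_boot all_order all_algebra.
From mathcomp Require Import mpoly.
From mathcomp Require Import all_classical all_reals all_analysis.

Set Implicit Arguments.
Unset Strict Implicit.
Unset Printing Implicit Defensive.

Import Order.TTheory GRing.Theory Num.Theory.
Import numFieldNormedType.Exports.
Local Open Scope classical_set_scope.
Local Open Scope ring_scope.

Section HSDefs.
Context {R : realType} {n : nat}.

(* Weight p!/(j_1!...j_n!) appearing in the Hilbert-Schmidt norm, inverted:
   if f = sum_m (p!/m!) phi_m x^m, then phi_m = f@_m * m!/p!, and
   ||f||_HS^2 = sum_m (p!/m!) phi_m^2 = sum_m (m!/p!) (f@_m)^2,
   where p = mdeg m for every monomial of the homogeneous f. *)
Definition hs_weight (m : 'X_{1..n}) : R :=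
  (\prod_(i < n) (m i)`!)%:R / ((mdeg m)`!)%:R.

(* Hilbert-Schmidt norm of a homogeneous polynomial = HS norm of its
   unique symmetric coefficient tensor. *)
Definition hs_norm (f : {mpoly R[n]}) : R :=
  Num.sqrt (\sum_(m <- msupp f) hs_weight m * (f@_m) ^+ 2).

Definition l2norm (x : 'I_n -> R) : R := Num.sqrt (\sum_i x i ^+ 2).

(* spectral norm: max of |f(x)| over the Euclidean unit sphere
   (the max is attained, so it is the supremum) *)
Definition sigma_norm (f : {mpoly R[n]}) : R :=
  sup [set `|f.@[x]| | x in [set x : 'I_n -> R | l2norm x = 1]].

Definition power_of_linear_form (f : {mpoly R[n]}) (p : nat) : Prop :=
  exists (a : R) (c : 'I_n -> R),
    [/\ a != 0, (exists i, c i != 0) & f = a *: (\sum_i c i *: 'X_i) ^+ p].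

Definition hs_root_seq (f : {mpoly R[n]}) : R^nat :=
  fun k => hs_norm (f ^+ k) `^ (k%:R)^-1.

Definition rho1 (f : {mpoly R[n]}) : R := limn (hs_root_seq f).

End HSDefs.

(* Main.v *)
Require Import Defs.
From HB Require Import structures.
From mathcomp Require Import all_boot all_order all_algebra.
From mathcomp Require Import mpoly.
From mathcomp Require Import all_classical all_reals all_analysis.
From mathcomp Require Import ring lra.
From mathcomp Require Import ssrcomplements.
From mathcomp Require Import zify.
Import Order.TTheory GRing.Theory Num.Theory.
Import numFieldNormedType.Exports.
Local Open Scope classical_set_scope.
Local Open Scope ring_scope.

Section CS.
Context {R : realType}.

Lemma lagrange_id (I : finType) (P : pred I) (w r s : I -> R) :
  \sum_(i | P i) \sum_(j | P j) w i * w j * (r i * s j - r j * s i) ^+ 2 =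
  2%:R * ((\sum_(i|P i) w i * r i ^+2) * (\sum_(i|P i) w i * s i ^+2)
          - (\sum_(i|P i) w i * r i * s i) ^+ 2).
Proof.
set X := fun i => w i * r i ^+ 2.
set Y := fun i => w i * s i ^+ 2.
set Z := fun i => w i * r i * s i.
transitivity (\sum_(i | P i) \sum_(j | P j) (X i * Y j + X j * Y i - 2%:R * (Z i * Z j))).
  by apply: eq_bigr => i _; apply: eq_bigr => j _; rewrite /X /Y /Z; ring.
have dsum : forall F G : I -> R, \sum_(i | P i) \sum_(j | P j) F i * G j =
    (\sum_(i | P i) F i) * (\sum_(i | P i) G i).
  by move=> F G; rewrite mulr_suml; apply: eq_bigr => i _; rewrite mulr_sumr.
under eq_bigr => i _ do rewrite sumrB big_split /=.
rewrite sumrB big_split /= dsum.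
have -> : \sum_(i | P i) \sum_(j | P j) X j * Y i = (\sum_(i | P i) X i) * (\sum_(i | P i) Y i).
  by rewrite exchange_big /= dsum.
have -> : \sum_(i | P i) \sum_(j | P j) 2%:R * (Z i * Z j) = 2%:R * (\sum_(i | P i) Z i) ^+ 2.
  by rewrite expr2 -dsum mulr_sumr; apply: eq_bigr => i _; rewrite mulr_sumr.
ring.
Qed.

Lemma cs_weighted (I : finType) (P : pred I) (w r s : I -> R) :
  (forall i, P i -> 0 <= w i) ->
  (\sum_(i|P i) w i * r i * s i) ^+ 2 <=
  (\sum_(i|P i) w i * r i ^+2) * (\sum_(i|P i) w i * s i ^+2).
Proof.
move=> w0; rewrite -subr_ge0.
have : 0 <= \sum_(i | P i) \sum_(j | P j) w i * w j * (r i * s j - r j * s i) ^+ 2.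
  apply: sumr_ge0 => i Pi; apply: sumr_ge0 => j Pj.
  by rewrite mulr_ge0 ?sqr_ge0 // mulr_ge0 ?w0.
by rewrite lagrange_id pmulr_rge0.
Qed.

Lemma cs_weighted_eq (I : finType) (P : pred I) (w r s : I -> R) :
  (forall i, P i -> 0 < w i) ->
  (\sum_(i|P i) w i * r i * s i) ^+ 2 =
  (\sum_(i|P i) w i * r i ^+2) * (\sum_(i|P i) w i * s i ^+2) ->
  forall i j, P i -> P j -> r i * s j = r j * s i.
Proof.
move=> w0 heq i j Pi Pj.
have h0 : \sum_(i | P i) \sum_(j | P j) w i * w j * (r i * s j - r j * s i) ^+ 2 = 0.
  by rewrite lagrange_id heq subrr mulr0.
have := psumr_eq0P _ h0 Pi.
move=> /(_ _) h1.
have h2 : \sum_(j | P j) w i * w j * (r i * s j - r j * s i) ^+ 2 = 0.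
  apply: h1 => k Pk; apply: sumr_ge0 => l Pl.
  by rewrite mulr_ge0 ?sqr_ge0 // mulr_ge0 // ltW ?w0.
have := psumr_eq0P _ h2 Pj => /(_ _) h3.
have : w i * w j * (r i * s j - r j * s i) ^+ 2 = 0.
  by apply: h3 => k Pk; rewrite mulr_ge0 ?sqr_ge0 // mulr_ge0 // ltW ?w0.
move/eqP; rewrite !mulf_eq0 (gt_eqF (w0 _ Pi)) (gt_eqF (w0 _ Pj)) /= orbb subr_eq0.
by move/eqP.
Qed.

End CS.

Section MP.
Context {R : realType} {n : nat}.
Implicit Types (m : 'X_{1..n}) (p q : {mpoly R[n]}).

Definition mfact m : nat := (\prod_(i < n) (m i)`!)%N.
Definition mono (c : 'I_n -> R) m : R := \prod_(i < n) c i ^+ m i.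
Definition linf (c : 'I_n -> R) : {mpoly R[n]} := \sum_i c i *: 'X_i.

Lemma mfact_gt0 m : (0 < mfact m)%N.
Proof. by rewrite /mfact prodn_gt0 // => i; rewrite fact_gt0. Qed.

Lemma subU_eq m i j : j != i -> (m - U_(i))%MM j = m j.
Proof. by move=> ji; rewrite mnmBE mnm1E eq_sym (negbTE ji) subn0. Qed.

Lemma subU_at m i : (m - U_(i))%MM i = (m i).-1.
Proof. by rewrite mnmBE mnm1E eqxx subn1. Qed.

Lemma mfact_subU {m i} : (0 < m i)%N -> mfact m = (m i * mfact (m - U_(i))%MM)%N.
Proof.
move=> mi; rewrite /mfact (bigD1 i) //= [X in _ = (_ * X)%N](bigD1 i) //= subU_at.
rewrite mulnA -{1}(prednK mi) factS prednK //; congr (_ * _)%N.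
by apply: eq_bigr => j ji; rewrite subU_eq.
Qed.

Lemma mono_subU (c : 'I_n -> R) {m i} : (0 < m i)%N ->
  c i * mono c (m - U_(i))%MM = mono c m.
Proof.
move=> mi; rewrite /mono (bigD1 i) //= [X in _ = X](bigD1 i) //= subU_at.
rewrite mulrA -exprS prednK //; congr (_ * _).
by apply: eq_bigr => j ji; rewrite subU_eq.
Qed.

Lemma mdeg_subU {m i} : (0 < m i)%N -> mdeg (m - U_(i))%MM = (mdeg m).-1.
Proof.
move=> mi; have le : (U_(i) <= m)%MM by rewrite lep1mP -lt0n.
by rewrite -{2}(submK le) mdegD mdeg1 addn1.
Qed.

Lemma mcoeffMXU p i m :
  (p * 'X_i)@_m = if (0 < m i)%N then p@_(m - U_(i))%MM else 0.
Proof.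
case: ifP => mi.
  have le : (U_(i) <= m)%MM by rewrite lep1mP -lt0n.
  by rewrite -{1}(submK le) addmC mcoeffMX.
apply/eqP; rewrite mcoeff_eq0; apply/negP.
rewrite (perm_mem (msuppMX p U_(i))) => /mapP [m' _ hm].
by move: mi; rewrite hm mnmDE mnm1E eqxx.
Qed.

Lemma mcoeff_linfX (c : 'I_n -> R) N m :
  (linf c ^+ N)@_m =
  if mdeg m == N then (N`!)%:R / (mfact m)%:R * mono c m else 0.
Proof.
elim: N m => [|N IH] m.
  rewrite expr0 mcoeff1 mdeg_eq0; case: eqP => // ->.
  rewrite /mfact /mono fact0 !big1 ?divr1 ?mul1r // => i _; rewrite mnm0E ?expr0 ?fact0 //.
rewrite exprSr /linf mulr_sumr raddf_sum /=.
under eq_bigr => i _ do rewrite -scalerAr mcoeffZ mcoeffMXU.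
case: (eqVneq (mdeg m) N.+1) => hdeg.
  transitivity (\sum_(i < n) (m i)%:R * ((N`!)%:R / (mfact m)%:R * mono c m)).
    apply: eq_bigr => i _; case: (posnP (m i)) => mi.
      by rewrite mi /= mulr0 mul0r.
    rewrite -/(linf c) IH mdeg_subU // hdeg eqxx.
    rewrite (mfact_subU mi) -(mono_subU c mi) natrM.
    have h1 : (m i)%:R != 0 :> R by rewrite pnatr_eq0 -lt0n.
    have h2 : (mfact (m - U_(i))%MM)%:R != 0 :> R by rewrite pnatr_eq0 -lt0n mfact_gt0.
    field; by rewrite h1 h2.
  rewrite -mulr_suml -natr_sum.
  have -> : (\sum_(i < n) m i)%N = N.+1 by rewrite -mdegE.
  by rewrite factS natrM; field; rewrite pnatr_eq0 -lt0n mfact_gt0.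
rewrite big1 // => i _; case: ifP => mi; last by rewrite mulr0.
rewrite -/(linf c) IH mdeg_subU //; case: eqP; last by rewrite mulr0.
by move=> h; move: hdeg; rewrite -(prednK (_ : 0 < mdeg m)%N) ?h ?eqxx //
  mdegE (bigD1 i) //= ltn_addr.
Qed.


Lemma big_msupp_bnd (B : nat) p (F : 'X_{1..n} -> R) :
  (forall m, m \in msupp p -> (mdeg m < B)%N) -> (forall m, p@_m = 0 -> F m = 0) ->
  \sum_(m <- msupp p) F m = \sum_(m : 'X_{1..n < B}) F m.
Proof.
move=> hB hF; pose I : subFinType _ := 'X_{1..n < B}.
rewrite (big_mksub I) //=; last exact: msupp_uniq.
rewrite big_rmcond //= => i; move/memN_msupp_eq0; exact: hF.
Qed.

Lemma msupp_deg {p N m} :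
  (forall m, mdeg m != N -> p@_m = 0) -> m \in msupp p -> mdeg m = N.
Proof.
move=> h; rewrite mcoeff_msupp => hnz; apply/eqP; apply: contraNT hnz => hm.
by rewrite h.
Qed.

Lemma homog_coeff {p N m} : p \is N.-homog -> mdeg m != N -> p@_m = 0.
Proof. by move=> hp hm; apply: dhomog_nemf_coeff hp hm. Qed.

Lemma meval_linf (c x : 'I_n -> R) : (linf c).@[x] = \sum_i c i * x i.
Proof.
rewrite /linf raddf_sum; apply: eq_bigr => i _.
by rewrite /= mevalZ mevalXU.
Qed.

Lemma linfX_coeff0 (c : 'I_n -> R) N m : mdeg m != N -> (linf c ^+ N)@_m = 0.
Proof. by move=> h; rewrite mcoeff_linfX (negbTE h). Qed.

Lemma linfX_homog (c : 'I_n -> R) N : linf c ^+ N \is N.-homog.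
Proof. by apply/dhomogP => m /(msupp_deg (linfX_coeff0 c N)). Qed.

Lemma multinom_sum (c : 'I_n -> R) N :
  \sum_(m : 'X_{1..n < N.+1} | mdeg m == N) (N`!)%:R / (mfact m)%:R * mono c m
  = (\sum_i c i) ^+ N.
Proof.
have := meval_linf c (fun _ => 1).
under eq_bigr => i _ do rewrite mulr1.
move=> <-; rewrite -rmorphXn /= mevalE.
rewrite (big_msupp_bnd N.+1); last first.
- by move=> m ->; rewrite mul0r.
- by move=> m /(msupp_deg (linfX_coeff0 c N)) ->.
rewrite big_mkcond /=; apply: eq_bigr => m _.
rewrite mcoeff_linfX; case: ifP => _; last by rewrite mul0r.
by rewrite (_ : \prod_(i < n) _ = 1) ?mulr1 // big1 // => i _; rewrite expr1n.
Qed.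

Definition hsq p : R := \sum_(m <- msupp p) hs_weight m * p@_m ^+ 2.

Lemma hs_normE p : hs_norm p = Num.sqrt (hsq p).
Proof. by []. Qed.

Lemma hs_weight_gt0 m : 0 < hs_weight (R:=R) m.
Proof.
rewrite /hs_weight divr_gt0 // ltr0n ?fact_gt0 //.
by rewrite prodn_gt0 // => i; rewrite fact_gt0.
Qed.

Lemma hs_weightE m : hs_weight (R:=R) m = (mfact m)%:R / ((mdeg m)`!)%:R.
Proof. by []. Qed.

Lemma hsq_ge0 p : 0 <= hsq p.
Proof.
by rewrite /hsq sumr_ge0 // => m _; rewrite mulr_ge0 ?sqr_ge0 // ltW ?hs_weight_gt0.
Qed.

Lemma hsq_bnd B p : (forall m, m \in msupp p -> (mdeg m < B)%N) ->
  hsq p = \sum_(m : 'X_{1..n < B}) hs_weight m * p@_m ^+ 2.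
Proof.
move=> hB; apply: big_msupp_bnd => // m ->.
by rewrite expr0n mulr0.
Qed.

Lemma hsq_linfX (c : 'I_n -> R) N : hsq (linf c ^+ N) = (\sum_i c i ^+ 2) ^+ N.
Proof.
rewrite (hsq_bnd N.+1); last first.
  by move=> m /(msupp_deg (linfX_coeff0 c N)) ->.
rewrite -multinom_sum [RHS]big_mkcond /=; apply: eq_bigr => m _.
rewrite mcoeff_linfX; case: eqP => hm; last by rewrite expr0n mulr0.
rewrite hs_weightE hm.
have -> : mono (fun i => c i ^+ 2) m = mono c m ^+ 2.
  rewrite /mono -prodrXl; apply: eq_bigr => i _; by rewrite -!exprM mulnC.
have h1 : (mfact m)%:R != 0 :> R by rewrite pnatr_eq0 -lt0n mfact_gt0.
have h2 : (N`!)%:R != 0 :> R by rewrite pnatr_eq0 -lt0n fact_gt0.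
by field; rewrite h1 h2.
Qed.


Lemma mono_sq (c : 'I_n -> R) m : mono (fun i => c i ^+ 2) m = mono c m ^+ 2.
Proof. rewrite /mono -prodrXl; apply: eq_bigr => i _; by rewrite -!exprM mulnC. Qed.

Lemma hsq_bnd_deg {N p} : p \is N.-homog ->
  hsq p = \sum_(m : 'X_{1..n < N.+1} | mdeg m == N) hs_weight m * p@_m ^+ 2.
Proof.
move=> hp; rewrite (hsq_bnd N.+1); last by move=> m /(dhomog_mf hp) ->.
rewrite [RHS]big_mkcond /=; apply: eq_bigr => m _; case: eqP => // /eqP hm.
by rewrite (homog_coeff hp hm) expr0n mulr0.
Qed.

Lemma meval_bnd_deg {N p} x : p \is N.-homog ->
  p.@[x] = \sum_(m : 'X_{1..n < N.+1} | mdeg m == N) p@_m * mono x m.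
Proof.
move=> hp; rewrite mevalE (big_msupp_bnd N.+1); last 2 first.
- by move=> m /(dhomog_mf hp) ->.
- by move=> m ->; rewrite mul0r.
rewrite [RHS]big_mkcond /=; apply: eq_bigr => m _; case: eqP => // /eqP hm.
by rewrite (homog_coeff hp hm) mul0r.
Qed.

Lemma meval_bound N p (x : 'I_n -> R) : p \is N.-homog ->
  p.@[x] ^+ 2 <= hsq p * (\sum_i x i ^+ 2) ^+ N.
Proof.
move=> hp.
pose w := fun m : 'X_{1..n < N.+1} => (N`!)%:R / (mfact m)%:R : R.
pose r := fun m : 'X_{1..n < N.+1} => hs_weight m * p@_m.
pose s := fun m : 'X_{1..n < N.+1} => mono x m.
have key : forall m : 'X_{1..n < N.+1}, mdeg m == N -> w m * hs_weight m = 1.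
  move=> m /eqP hm; rewrite /w hs_weightE hm.
  have h1 : (mfact m)%:R != 0 :> R by rewrite pnatr_eq0 -lt0n mfact_gt0.
  have h2 : (N`!)%:R != 0 :> R by rewrite pnatr_eq0 -lt0n fact_gt0.
  by field; rewrite h1 h2.
have := cs_weighted _ (fun m : 'X_{1..n < N.+1} => mdeg m == N) w r s.
rewrite (meval_bnd_deg x hp) (hsq_bnd_deg hp) -multinom_sum.
have -> : \sum_(m : 'X_{1..n < N.+1} | mdeg m == N) w m * r m * s m =
    \sum_(m : 'X_{1..n < N.+1} | mdeg m == N) p@_m * mono x m.
  by apply: eq_bigr => m hm; rewrite /r mulrA key // mul1r.
have -> : \sum_(m : 'X_{1..n < N.+1} | mdeg m == N) w m * r m ^+ 2 =
    \sum_(m : 'X_{1..n < N.+1} | mdeg m == N) hs_weight m * p@_m ^+ 2.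
  apply: eq_bigr => m hm; rewrite /r.
  transitivity ((w m * hs_weight m) * (hs_weight m * p@_m ^+ 2)); first by ring.
  by rewrite key // mul1r.
have -> : \sum_(m : 'X_{1..n < N.+1} | mdeg m == N) w m * s m ^+ 2 =
    \sum_(m : 'X_{1..n < N.+1} | mdeg m == N) (N`!)%:R / (mfact m)%:R * mono (fun i => x i ^+ 2) m.
  by apply: eq_bigr => m hm; rewrite /s mono_sq.
apply => m _; rewrite /w divr_ge0 // ler0n.
Qed.


Lemma hsq_bnd_deg' B N p : (N < B)%N -> p \is N.-homog ->
  hsq p = \sum_(m : 'X_{1..n < B} | mdeg m == N) hs_weight m * p@_m ^+ 2.
Proof.
move=> NB hp; rewrite (hsq_bnd B); last by move=> m /(dhomog_mf hp) ->.
rewrite [RHS]big_mkcond /=; apply: eq_bigr => m _; case: eqP => // /eqP hm.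
by rewrite (homog_coeff hp hm) expr0n mulr0.
Qed.

Lemma mcoeffM_bnd B p q (m : 'X_{1..n < B}) :
  (p * q)@_m = \sum_(k : 'X_{1..n < B, B} | val m == (val k.1 + val k.2)%MM)
      p@_k.1 * q@_k.2.
Proof. exact: (mcoeff_poly_mul p q (bmdeg m)). Qed.

Lemma wkey {N} {a : 'X_{1..n}} : mdeg a = N ->
  (N`!)%:R / (mfact a)%:R * hs_weight a = 1 :> R.
Proof.
move=> hm; rewrite hs_weightE hm.
have h1 : (mfact a)%:R != 0 :> R by rewrite pnatr_eq0 -lt0n mfact_gt0.
have h2 : (N`!)%:R != 0 :> R by rewrite pnatr_eq0 -lt0n fact_gt0.
by field; rewrite h1 h2.
Qed.

Lemma mono1 m : mono (fun _ => 1 : R) m = 1.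
Proof. by rewrite /mono big1 // => i _; rewrite expr1n. Qed.

Section MI.
Variables (P Q : nat) (f g : {mpoly R[n]}).
Hypotheses (hf : f \is P.-homog) (hg : g \is Q.-homog).
Local Notation B := (P + Q).+1.
Local Notation M := 'X_{1..n < B}.

Definition Pm (m : M) (k : M * M) : bool :=
  (val m == (val k.1 + val k.2)%MM) && (mdeg k.1 == P).
Definition wt (k : M * M) : R :=
  (P`!)%:R / (mfact k.1)%:R * ((Q`!)%:R / (mfact k.2)%:R).
Definition rr (k : M * M) : R :=
  hs_weight k.1 * f@_k.1 * (hs_weight k.2 * g@_k.2).

Lemma Pm_deg2 {m : M} {k} : mdeg m = (P + Q)%N -> Pm m k -> mdeg k.2 = Q.
Proof.
move=> hm /andP [/eqP e /eqP h1]; move: hm; rewrite e mdegD h1.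
by move/eqP; rewrite eqn_add2l => /eqP.
Qed.

Lemma coeffM_Pm {p} q (hp : p \is P.-homog) (m : M) :
  (p * q)@_m = \sum_(k | Pm m k) p@_k.1 * q@_k.2.
Proof.
rewrite mcoeffM_bnd (bigID (fun k : M * M => mdeg k.1 == P)) /=.
rewrite [X in _ + X]big1 ?addr0 //.
by move=> k /andP [_ h]; rewrite (homog_coeff hp h) mul0r.
Qed.

Lemma sum_wt {m : M} : mdeg m = (P + Q)%N ->
  \sum_(k | Pm m k) wt k = ((P + Q)`!)%:R / (mfact m)%:R.
Proof.
move=> hm.
have := mcoeff_linfX (fun _ => 1 : R) (P + Q) m.
rewrite hm eqxx mono1 mulr1 exprD (coeffM_Pm _ (linfX_homog _ _)) => <-.
apply: eq_bigr => k hk; rewrite !mcoeff_linfX !mono1 !mulr1.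
by rewrite (eqP (proj2 (andP hk))) (Pm_deg2 hm hk) !eqxx.
Qed.


Definition tt (k : M * M) : R :=
  hs_weight k.1 * f@_k.1 ^+ 2 * (hs_weight k.2 * g@_k.2 ^+ 2).

Lemma wt_gt0 k : 0 < wt k.
Proof.
by rewrite /wt mulr_gt0 // divr_gt0 // ltr0n ?fact_gt0 ?mfact_gt0.
Qed.

Lemma wt_rr {m : M} {k} : mdeg m = (P + Q)%N -> Pm m k ->
  wt k * rr k = f@_k.1 * g@_k.2.
Proof.
move=> hm hk; have h1 := eqP (proj2 (andP hk)); have h2 := Pm_deg2 hm hk.
rewrite /wt /rr; set w1 := _ / _; set w2 := _ / _.
transitivity ((w1 * hs_weight k.1) * (w2 * hs_weight k.2) * (f@_k.1 * g@_k.2)).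
  by ring.
by rewrite /w1 /w2 (wkey h1) (wkey h2) !mul1r.
Qed.

Lemma wt_rr2 {m : M} {k} : mdeg m = (P + Q)%N -> Pm m k -> wt k * rr k ^+ 2 = tt k.
Proof.
move=> hm hk; have h1 := eqP (proj2 (andP hk)); have h2 := Pm_deg2 hm hk.
rewrite /wt /rr /tt; set w1 := _ / _; set w2 := _ / _.
transitivity ((w1 * hs_weight k.1) * (w2 * hs_weight k.2) *
   (hs_weight k.1 * f@_k.1 ^+ 2 * (hs_weight k.2 * g@_k.2 ^+ 2))).
  by ring.
by rewrite /w1 /w2 (wkey h1) (wkey h2) !mul1r.
Qed.

Lemma cs_m {m : M} : mdeg m = (P + Q)%N ->
  ((f * g)@_m) ^+ 2 <= (\sum_(k | Pm m k) tt k) * (((P + Q)`!)%:R / (mfact m)%:R)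
  /\ (((f * g)@_m) ^+ 2 = (\sum_(k | Pm m k) tt k) * (((P + Q)`!)%:R / (mfact m)%:R) ->
      forall k k', Pm m k -> Pm m k' -> rr k = rr k').
Proof.
move=> hm.
have e1 : \sum_(k | Pm m k) wt k * rr k * 1 = (f * g)@_m.
  by rewrite (coeffM_Pm g hf); apply: eq_bigr => k hk; rewrite mulr1 (wt_rr hm hk).
have e2 : \sum_(k | Pm m k) wt k * rr k ^+ 2 = \sum_(k | Pm m k) tt k.
  by apply: eq_bigr => k hk; rewrite (wt_rr2 hm hk).
have e3 : \sum_(k | Pm m k) wt k * 1 ^+ 2 = ((P + Q)`!)%:R / (mfact m)%:R.
  by rewrite -(sum_wt hm); apply: eq_bigr => k _; rewrite expr1n mulr1.
split.
  by have := cs_weighted _ (Pm m) wt rr (fun _ => 1) (fun k _ => ltW (wt_gt0 k));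
    rewrite e1 e2 e3.
move=> heq k k' hk hk'.
have := @cs_weighted_eq R _ (Pm m) wt rr (fun _ => 1) (fun k _ => wt_gt0 k).
rewrite e1 e2 e3 => /(_ heq k k' hk hk').
by rewrite !mulr1.
Qed.


Lemma hsqM_sum :
  hsq f * hsq g = \sum_(m : M | mdeg m == (P + Q)%N) \sum_(k | Pm m k) tt k.
Proof.
rewrite (hsq_bnd_deg' B _ _ _ hf) ?ltnS ?leq_addr //.
rewrite (hsq_bnd_deg' B _ _ _ hg) ?ltnS ?leq_addl //.
rewrite mulr_suml.
under eq_bigr => a _ do rewrite mulr_sumr.
rewrite pair_big_dep /=.
rewrite (exchange_big_dep (fun k : M * M => mdeg k.1 == P)) /=; last first.
  by move=> m k _ /andP [].
rewrite big_mkcondr /=; apply: eq_bigr => k /eqP h1.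
case: (eqVneq (mdeg k.2) Q) => h2; last first.
  rewrite big1 // => m _; rewrite /tt (homog_coeff hg h2) expr0n !mulr0 //.
have hdeg : (mdeg (val k.1 + val k.2)%MM < B)%N by rewrite mdegD h1 h2.
pose m0 : M := BMultinom hdeg.
rewrite (big_pred1 m0) // => m /=; rewrite /Pm h1 eqxx andbT.
apply/andP/idP => [[_ /eqP e]|/eqP ->]; first by apply/eqP/val_inj.
by rewrite /= mdegD h1 h2 !eqxx.
Qed.

Lemma hsqM_fg :
  hsq (f * g) = \sum_(m : M | mdeg m == (P + Q)%N) hs_weight m * (f * g)@_m ^+ 2.
Proof. by rewrite (hsq_bnd_deg' B _ _ _ (dhomogM hf hg)). Qed.

Lemma hsqM_le : hsq (f * g) <= hsq f * hsq g.
Proof.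
rewrite hsqM_fg hsqM_sum; apply: ler_sum => m /eqP hm.
have [h _] := cs_m hm.
set T := \sum_(k | Pm m k) tt k in h *.
set C := _ / _ in h.
apply: (@le_trans _ _ (hs_weight m * (T * C))).
  by rewrite ler_pM2l ?hs_weight_gt0.
rewrite (_ : hs_weight m * (T * C) = T * (C * hs_weight m)); last by ring.
by rewrite /C (wkey hm) mulr1.
Qed.


Lemma hsqM_eq : hsq (f * g) = hsq f * hsq g ->
  forall a b a' b' : 'X_{1..n}, mdeg a = P -> mdeg b = Q -> mdeg a' = P ->
  mdeg b' = Q -> (a + b = a' + b')%MM ->
  hs_weight a * f@_a * (hs_weight b * g@_b) =
  hs_weight a' * f@_a' * (hs_weight b' * g@_b').
Proof.
move=> heq a b a' b' ha hb ha' hb' hab.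
have hD : \sum_(m : M | mdeg m == (P + Q)%N)
    (\sum_(k | Pm m k) tt k - hs_weight m * (f * g)@_m ^+ 2) = 0.
  by rewrite sumrB -hsqM_fg -hsqM_sum heq subrr.
have hmB : (mdeg (a + b)%MM < B)%N by rewrite mdegD ha hb.
pose m0 : M := BMultinom hmB.
have hm0 : mdeg m0 = (P + Q)%N by rewrite /= mdegD ha hb.
have := psumr_eq0P _ hD (i := m0).
case/(_ _ _)/Wrap => [m /eqP hm| |].
- have [h _] := cs_m hm; rewrite subr_ge0.
  set T := \sum_(k | Pm m k) tt k in h *.
  set C := _ / _ in h.
  apply: (@le_trans _ _ (hs_weight m * (T * C))).
    by rewrite ler_pM2l ?hs_weight_gt0.
  rewrite (_ : hs_weight m * (T * C) = T * (C * hs_weight m)); last by ring.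
  by rewrite /C (wkey hm) mulr1.
- by rewrite hm0 eqxx.
move=> /eqP; rewrite subr_eq0 => /eqP hT.
have [_ h] := cs_m hm0.
have hlA : (mdeg a < B)%N by rewrite ha ltnS leq_addr.
have hlB : (mdeg b < B)%N by rewrite hb ltnS leq_addl.
have hlA' : (mdeg a' < B)%N by rewrite ha' ltnS leq_addr.
have hlB' : (mdeg b' < B)%N by rewrite hb' ltnS leq_addl.
have := h _ (BMultinom hlA, BMultinom hlB) (BMultinom hlA', BMultinom hlB').
rewrite /rr /=; apply.
- rewrite hT; set C := _ / _.
  rewrite (_ : hs_weight m0 * (f * g)@_m0 ^+ 2 * C = (f * g)@_m0 ^+ 2 * (C * hs_weight m0)); last by ring.
  by rewrite /C (wkey hm0) mulr1.
- by rewrite /Pm /= ha !eqxx.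
- by rewrite /Pm /= ha' hab !eqxx.
Qed.

End MI.


Lemma mono_add (c : 'I_n -> R) m1 m2 : mono c (m1 + m2)%MM = mono c m1 * mono c m2.
Proof.
by rewrite /mono -big_split /=; apply: eq_bigr => i _; rewrite mnmDE exprD.
Qed.

Lemma mono_U (c : 'I_n -> R) i : mono c U_(i)%MM = c i.
Proof.
rewrite /mono (bigD1 i) //= mnm1E eqxx expr1 big1 ?mulr1 // => j ji.
by rewrite mnm1E eq_sym (negbTE ji) expr0.
Qed.

Lemma mdeg_pos_exists (m : 'X_{1..n}) : (0 < mdeg m)%N -> exists i, (0 < m i)%N.
Proof.
rewrite mdegE => h; apply/existsP; apply: contraLR h; rewrite negb_exists.
move=> /forallP h; rewrite -leqNgt leqn0 sum_nat_eq0; apply/forallP => i.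
by apply/implyP => _; have := h i; rewrite lt0n negbK.
Qed.

Lemma exists_supp {p} : p != 0 -> exists m, p@_m != 0.
Proof.
move=> hp; exists (mlead p); by rewrite mleadc_eq0.
Qed.

Lemma mdeg_two (a : 'X_{1..n}) {i j : 'I_n} : j != i -> (a i + a j <= mdeg a)%N.
Proof.
move=> ji; rewrite mdegE (bigD1 i) //= (bigD1 j) //= ?addnA ?leq_addr //.
Qed.

Lemma mdeg_other {a : 'X_{1..n}} {s : 'I_n} : (a s < mdeg a)%N ->
  exists i, i != s /\ (0 < a i)%N.
Proof.
rewrite mdegE (bigD1 s) //= -{1}[a s]addn0 ltn_add2l => h.
have [i hi] : exists i, (i != s) && (0 < a i)%N.
  apply/existsP; apply: contraLR h; rewrite negb_exists => /forallP hn.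
  rewrite -leqNgt leqn0 sum_nat_eq0; apply/forallP => i; apply/implyP => his.
  by have := hn i; rewrite his /= lt0n negbK.
by exists i; case/andP: hi.
Qed.

Lemma mono_mulmn (c : 'I_n -> R) m k : mono c (m *+ k)%MM = mono c m ^+ k.
Proof.
rewrite /mono -prodrXl; apply: eq_bigr => i _; by rewrite mulmnE exprM.
Qed.

Section RK.
Variables (P Q : nat) (f g : {mpoly R[n]}).
Hypotheses (hf : f \is P.-homog) (hg : g \is Q.-homog) (g0 : g != 0) (Q0 : (0 < Q)%N).
Local Notation phi a := (hs_weight a * f@_a).
Local Notation psi b := (hs_weight b * g@_b).
Hypothesis hsym : forall a b a' b' : 'X_{1..n}, mdeg a = P -> mdeg b = Q -> mdeg a' = P ->
  mdeg b' = Q -> (a + b = a' + b')%MM -> phi a * psi b = phi a' * psi b'.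

Lemma rank_one : exists (lam : R) (u : 'I_n -> R),
  (exists i, u i != 0) /\ f = lam *: linf u ^+ P.
Proof.
have [b0 hb0] := exists_supp g0.
have db0 : mdeg b0 = Q.
  by apply/eqP; apply: contraNT hb0 => h; rewrite (homog_coeff hg h).
have [s hs] : exists s, (0 < b0 s)%N by apply: mdeg_pos_exists; rewrite db0.
have psi0 : psi b0 != 0 by rewrite mulf_neq0 // gt_eqF ?hs_weight_gt0.
pose u := fun i => psi (b0 - U_(s) + U_(i))%MM / psi b0.
have us : u s = 1.
  rewrite /u submK ?divff // lep1mP -lt0n //.
pose lam := phi (U_(s) *+ P)%MM.
exists lam, u; split; first by exists s; rewrite us oner_eq0.
have claim : forall t a, mdeg a = P -> (P - a s)%N = t -> phi a = lam * mono u a.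
  elim=> [|t IH] a ha ht.
    have e : a = (U_(s) *+ P)%MM.
      apply/mnmP => j; rewrite mulmnE mnm1E.
      have les : (a s <= P)%N by rewrite -ha mdegE (bigD1 s) //= leq_addr.
      case: eqP => [<-|/eqP js]; first by rewrite mul1n; apply/eqP; rewrite eqn_leq les /= -subn_eq0 ht.
      rewrite mul0n; have := mdeg_two a (j := j) (i := s); rewrite ha.
      by rewrite eq_sym in js; move/(_ js); move: ht; clear; lia.
    by rewrite e /lam mono_mulmn mono_U us expr1n mulr1.
  have lt : (a s < mdeg a)%N by rewrite ha; move: ht; clear; lia.
  have [i [isn ai]] := mdeg_other lt.
  pose a' := (a - U_(i) + U_(s))%MM.
  pose b' := (b0 - U_(s) + U_(i))%MM.
  have ha' : mdeg a' = P by rewrite mdegD mdeg_subU // mdeg1 ha addn1 prednK //; move: ht; clear; lia.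
  have hb' : mdeg b' = Q by rewrite mdegD mdeg_subU // mdeg1 db0 addn1 prednK //; move: Q0; clear; lia.
  have a's : a' s = (a s).+1.
    by rewrite mnmDE mnmBE !mnm1E eqxx (negbTE isn) subn0 addn1.
  have IH' := IH a' ha'; rewrite a's in IH'.
  have {}IH' : phi a' = lam * mono u a' by apply: IH'; move: ht; clear; lia.
  have e : (a + b0 = a' + b')%MM.
    apply/mnmP => j; rewrite !mnmDE !mnmBE !mnm1E.
    case: (eqVneq i j) => [<-|ij]; first by rewrite eq_sym (negbTE isn); move: ai; clear; lia.
    case: (eqVneq s j) => [<-|sj]; last by rewrite !subn0 !addn0.
    by move: hs; clear; lia.
  have := hsym a b0 a' b' ha db0 ha' hb' e.
  rewrite IH' => h.
  have -> : phi a = lam * mono u a' * psi b' / psi b0.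
    by rewrite -h mulfK.
  rewrite /a' mono_add mono_U us mulr1 -(mono_subU u ai) /u.
  rewrite /b'; set X := mono _ _; set Y := psi _; set Z := psi b0.
  clearbody X Y Z; ring.
apply/mpolyP => a; rewrite mcoeffZ mcoeff_linfX; case: eqP => ha; last first.
  by rewrite mulr0 (homog_coeff hf) //; apply/eqP.
have := claim _ a ha erefl.
have w0 : hs_weight (R:=R) a != 0 by rewrite gt_eqF ?hs_weight_gt0.
have := wkey ha; set C := _ / _ => hC.
have -> : C = (hs_weight a)^-1 by apply: (mulIf w0); rewrite hC mulVf.
move=> h; rewrite -[f@_a](mulKf w0) h.
clearbody u lam; set W := hs_weight a in w0 *; set Mo := mono u a.
clearbody W Mo; by field.
Qed.

End RK.


Lemma sumsq_gt0 (u : 'I_n -> R) : (exists i, u i != 0) -> 0 < \sum_i u i ^+ 2.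
Proof.
move=> [i ui]; rewrite (bigD1 i) //=.
have h1 : 0 < u i ^+ 2 by rewrite lt0r sqr_ge0 andbT sqrf_eq0.
have h2 : 0 <= \sum_(j < n | j != i) u j ^+ 2 by apply: sumr_ge0 => j _; exact: sqr_ge0.
lra.
Qed.

Lemma power_root (f : {mpoly R[n]}) P k lam (u : 'I_n -> R) :
  (0 < k)%N -> f != 0 -> (exists i, u i != 0) ->
  f ^+ k = lam *: linf u ^+ (P * k) ->
  exists a, a != 0 /\ f = a *: linf u ^+ P.
Proof.
move=> k0 f0 u0 hk.
set q := \sum_i u i ^+ 2.
have q0 : 0 < q by apply: sumsq_gt0.
have Lu : (linf u).@[u] = q by rewrite meval_linf; apply: eq_bigr => i _; rewrite expr2.
have fk0 : f ^+ k != 0 by rewrite expf_neq0.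
have lam0 : lam != 0 by apply: contraNneq fk0 => l0; rewrite hk l0 scale0r.
have fu : (f ^+ k).@[u] = lam * q ^+ (P * k) by rewrite hk mevalZ rmorphXn /= Lu.
have fu0 : f.@[u] != 0.
  apply: contraTneq (erefl true) => h.
  move: fu; rewrite rmorphXn /= h expr0n gt_eqF //= => /esym/eqP.
  by rewrite mulf_eq0 (negbTE lam0) expf_eq0 gt_eqF // andbF.
pose a := f.@[u] / q ^+ P.
have qP0 : q ^+ P != 0 by rewrite expf_neq0 // gt_eqF.
have a0 : a != 0 by rewrite /a mulf_neq0 // invr_eq0.
exists a; split => //.
pose h := a *: linf u ^+ P.
have hu : h.@[u] = f.@[u] by rewrite /h mevalZ rmorphXn /= Lu /a mulfVK.
have hk' : h ^+ k = f ^+ k.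
  rewrite hk /h exprZn -exprM; congr (_ *: _).
  have qPk : q ^+ (P * k) != 0 by rewrite expf_neq0 // gt_eqF.
  apply: (mulIf qPk).
  rewrite -fu rmorphXn /= /a exprMn exprVn -exprM mulfVK //.
have : (f - h) * (\sum_(i < k) f ^+ (k.-1 - i) * h ^+ i) = 0.
  by rewrite -subrXX hk' subrr.
move/eqP; rewrite mulf_eq0 => /orP [/eqP|]; first by move/subr0_eq.
move=> /eqP hs; exfalso.
have : (\sum_(i < k) f ^+ (k.-1 - i) * h ^+ i).@[u] = 0 by rewrite hs meval0.
rewrite raddf_sum /=.
have hi : forall i : 'I_k, (i <= k.-1)%N by move=> i; rewrite -ltnS prednK // ltn_ord.
under eq_bigr => i _ do rewrite /= mevalM !rmorphXn /= hu -exprD (subnK (hi i)).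
rewrite sumr_const card_ord => /eqP; rewrite mulrn_eq0 expf_eq0 (negbTE fu0) andbF orbF.
by move/eqP => e; move: k0; rewrite e.
Qed.

End MP.

Section FK.
Context {R : realType}.
Variable a : nat -> R.
Hypothesis a0 : forall k, 0 < a k.
Hypothesis asub : forall k l, a (k + l) <= a k * a l.

Definition sq k : R := a k `^ (k%:R)^-1.

Lemma sq_ge0 k : 0 <= sq k.
Proof. exact: powR_ge0. Qed.

Lemma sqK {k} : (0 < k)%N -> sq k ^+ k = a k.
Proof.
move=> k0; rewrite /sq -powR_mulrn ?powR_ge0 // -powRrM mulVf ?powRr1 ?ltW //.
by rewrite pnatr_eq0 -lt0n.
Qed.

Lemma sq_gt0 {k} : (0 < k)%N -> 0 < sq k.
Proof.
move=> k0; rewrite lt0r sq_ge0 andbT; apply/eqP => h.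
have := sqK k0; rewrite h expr0n gtn_eqF // => e; by move: (a0 k); rewrite -e ltxx.
Qed.

Lemma le_sq k x : (0 < k)%N -> 0 <= x -> (x ^+ k <= a k) = (x <= sq k).
Proof. by move=> k0 x0; rewrite -(sqK k0) ler_pXn2r // nnegrE ?sq_ge0. Qed.

Lemma bernoulli_ineq (x : R) k : 0 <= x -> 1 + k%:R * x <= (1 + x) ^+ k.
Proof.
move=> x0; elim: k => [|k IH]; first by rewrite mul0r addr0 expr0.
rewrite exprS -natr1.
have h1 : 0 <= (1 + x) ^+ k by rewrite exprn_ge0 // addr_ge0.
have : (1 + x) * (1 + k%:R * x) <= (1 + x) * (1 + x) ^+ k.
  by rewrite ler_pM2l // ltr_pwDl.
have hk : 0 <= k%:R * x ^+ 2 :> R by rewrite mulr_ge0 ?sqr_ge0.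
move=> h; apply: le_trans h; rewrite expr2 in hk; nra.
Qed.

Lemma asub_iter m q r : a (q * m + r) <= a m ^+ q * a r.
Proof.
elim: q => [|q IH]; first by rewrite mul0n add0n expr0 mul1r.
rewrite mulSn -addnA exprS -mulrA; apply: le_trans (asub _ _) _.
by rewrite ler_pM2l.
Qed.

Definition Em m : R := \sum_(r < m) a r / sq m ^+ r.

Lemma Em_ge0 {m} : (0 < m)%N -> 0 <= Em m.
Proof.
move=> m0; apply: sumr_ge0 => r _; rewrite divr_ge0 ?ltW ?a0 //.
by rewrite exprn_gt0 ?sq_gt0.
Qed.

Lemma sq_bound m k : (0 < m)%N -> (0 < k)%N -> sq k <= sq m * (1 + Em m / k%:R).
Proof.
move=> m0 k0.
have sm0 := sq_gt0 m0.
have k0' : 0 < k%:R :> R by rewrite ltr0n.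
rewrite -(ler_pXn2r k0) ?nnegrE ?mulr_ge0 ?sq_ge0 ?addr_ge0 ?divr_ge0 ?Em_ge0 ?ler0n // (sqK k0).
set q := (k %/ m)%N; set r := (k %% m)%N.
have kd : k = (q * m + r)%N by rewrite /q /r -divn_eq.
have rm : (r < m)%N by rewrite /r ltn_mod.
have h1 : a k <= sq m ^+ k * (a r / sq m ^+ r).
  have srp : sq m ^+ r != 0 by rewrite expf_neq0 // gt_eqF.
  have e1 : sq m ^+ k * (a r / sq m ^+ r) = a m ^+ q * a r.
    rewrite kd exprD mulnC exprM (sqK m0) -mulrA; congr (_ * _).
    by rewrite mulrC mulfVK.
  rewrite e1 kd; exact: asub_iter.
apply: le_trans h1 _; rewrite exprMn ler_pM2l ?exprn_gt0 //.
have h2 : a r / sq m ^+ r <= Em m.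
  rewrite /Em (bigD1 (Ordinal rm)) //= lerDl sumr_ge0 // => i _.
  by rewrite divr_ge0 ?ltW ?a0 // exprn_gt0 ?sq_gt0.
apply: le_trans h2 _.
have := bernoulli_ineq (Em m / k%:R) k (divr_ge0 (Em_ge0 m0) (ltW k0')).
rewrite mulrC divfK ?gt_eqF //; apply: le_trans; by rewrite lerDr.
Qed.


Definition Linf : R := inf [set sq k | k in [set k | (0 < k)%N]].

Lemma has_inf_sq : has_inf [set sq k | k in [set k | (0 < k)%N]].
Proof.
split; first by exists (sq 1), 1%N.
by exists 0 => x [k _ <-]; exact: sq_ge0.
Qed.

Lemma Linf_le k : (0 < k)%N -> Linf <= sq k.
Proof. by move=> k0; apply: ge_inf; [exact: (proj2 has_inf_sq) | exists k]. Qed.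

Lemma sq_cvg : sq @ \oo --> Linf.
Proof.
apply/cvgrPdist_le => e e0.
have e20 : 0 < e / 2 by rewrite divr_gt0.
have [_ [m m0 <-] hm] := inf_adherent e20 has_inf_sq.
pose C := sq m * Em m.
have C0 : 0 <= C by rewrite mulr_ge0 ?sq_ge0 ?Em_ge0.
have [K hK] : exists K : nat, C * 2 / e < K%:R.
  by exists (Num.Def.trunc (C * 2 / e)).+1; exact: truncnS_gt.
near=> k.
have kK : (K.+1 <= k)%N by near: k; exact: nbhs_infty_ge.
have k0 : (0 < k)%N by apply: leq_trans kK.
have hk := sq_bound m k m0 k0.
have hl := Linf_le k k0.
have kr : K%:R < k%:R :> R by rewrite ltr_nat.
have kpos : 0 < k%:R :> R by rewrite ltr0n.
have hC : C / k%:R <= e / 2.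
  rewrite ler_pdivrMr // mulrC -ler_pdivrMr //.
  rewrite (_ : C / (e / 2) = C * 2 / e); last by field; rewrite gt_eqF.
  by apply: ltW; exact: lt_trans hK kr.
have e2 : sq m * (1 + Em m / k%:R) = sq m + C / k%:R by rewrite /C mulrDr mulr1 mulrA.
rewrite e2 in hk; rewrite -/Linf in hm.
rewrite distrC ger0_norm ?subr_ge0 //.
clearbody C; lra.
Unshelve. all: by end_near.
Qed.

End FK.

Section Final.
Context {R : realType} {n : nat}.
Implicit Types (p q : {mpoly R[n]}).

Lemma hsq_gt0 p : p != 0 -> 0 < hsq p.
Proof.
move=> p0; have [m hm] := exists_supp p0.
have mi : m \in msupp p by rewrite mcoeff_msupp.
rewrite /hsq (bigD1_seq m) ?msupp_uniq //=.
have h1 : 0 < hs_weight m * p@_m ^+ 2.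
  by rewrite mulr_gt0 ?hs_weight_gt0 // lt0r sqr_ge0 andbT sqrf_eq0.
have h2 : 0 <= \sum_(j <- msupp p | j != m) hs_weight j * p@_j ^+ 2.
  by apply: sumr_ge0 => j _; rewrite mulr_ge0 ?sqr_ge0 // ltW ?hs_weight_gt0.
lra.
Qed.

Lemma hs_norm_gt0 p : p != 0 -> 0 < hs_norm p.
Proof. by move=> p0; rewrite hs_normE sqrtr_gt0 hsq_gt0. Qed.

Lemma hs_normM_le P Q p q : p \is P.-homog -> q \is Q.-homog ->
  hs_norm (p * q) <= hs_norm p * hs_norm q.
Proof.
move=> hp hq; rewrite !hs_normE -sqrtrM ?hsq_ge0 // ler_sqrt ?mulr_ge0 ?hsq_ge0 //.
exact: (@hsqM_le R n P Q p q hp hq).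
Qed.

Lemma hsqZ N lam p : p \is N.-homog -> hsq (lam *: p) = lam ^+ 2 * hsq p.
Proof.
move=> hp; rewrite (hsq_bnd_deg' N.+1 _ _ _ (dhomogZ lam hp)) //.
rewrite (hsq_bnd_deg' N.+1 _ _ _ hp) // mulr_sumr; apply: eq_bigr => m _.
by rewrite mcoeffZ; ring.
Qed.

Lemma sqrtX (s : R) N : 0 <= s -> Num.sqrt (s ^+ N) = Num.sqrt s ^+ N.
Proof.
move=> s0; rewrite -{1}(sqr_sqrtr s0) -exprM mulnC exprM sqrtr_sqr.
by rewrite ger0_norm // exprn_ge0 // sqrtr_ge0.
Qed.

Lemma l2norm1 (x : 'I_n -> R) : l2norm x = 1 -> \sum_i x i ^+ 2 = 1.
Proof.
rewrite /l2norm => h.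
have s0 : 0 <= \sum_i x i ^+ 2 by apply: sumr_ge0 => i _; exact: sqr_ge0.
by rewrite -(sqr_sqrtr s0) h expr1n.
Qed.

Lemma eval_le_hs N p (x : 'I_n -> R) : p \is N.-homog -> l2norm x = 1 ->
  `|p.@[x]| <= hs_norm p.
Proof.
move=> hp hx; have := meval_bound N p x hp; rewrite (l2norm1 x hx) expr1n mulr1.
by rewrite -(ler_sqrt _ (hsq_ge0 p)) sqrtr_sqr.
Qed.

Lemma sup_attained (A : set R) v : A v -> ubound A v -> sup A = v.
Proof.
move=> Av ub; apply/le_anti/andP; split; first by apply: ge_sup => //; exists v.
by apply: sup_upper_bound => //; split; [exists v | exists v].
Qed.

Definition unit_vec (i0 : 'I_n) : 'I_n -> R := fun i => (i == i0)%:R.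

Lemma l2norm_unit i0 : l2norm (unit_vec i0) = 1.
Proof.
rewrite /l2norm (bigD1 i0) //= big1 ?addr0 /unit_vec ?eqxx ?expr1n ?sqrtr1 //.
by move=> i /negbTE ->; rewrite expr0n.
Qed.

End Final.

Theorem theorem2p2 (R : realType) (n p : nat) (f : {mpoly R[n]}) :
  f != 0 -> (0 < p)%N -> f \is p.-homog ->
  (forall (a : R) (c : 'I_n -> R),
      a != 0 -> (exists i, c i != 0) -> f = a *: (\sum_i c i *: 'X_i) ^+ p ->
      forall k : nat,
        hs_norm (f ^+ k) = sigma_norm (f ^+ k) /\
        sigma_norm (f ^+ k) = `|a| ^+ k * l2norm c ^+ (k * p))
  /\
  (~ power_of_linear_form f p ->
      (forall k l : nat, (0 < k)%N -> (0 < l)%N ->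
          hs_norm (f ^+ (k + l)) < hs_norm (f ^+ k) * hs_norm (f ^+ l)) /\
      (forall k : nat, (0 < k)%N -> hs_norm (f ^+ (2 * k)) < hs_norm (f ^+ k) ^+ 2) /\
      (forall k : nat, (0 < k)%N -> sigma_norm f ^+ k < hs_norm (f ^+ k)) /\
      cvgn (hs_root_seq f) /\
      sigma_norm f <= rho1 f /\
      (forall k : nat, (0 < k)%N -> rho1 f < hs_norm (f ^+ k) `^ (k%:R)^-1)).
Proof.
move=> f0 p0 hf.
have hfk : forall k, f ^+ k \is (p * k).-homog by move=> k; exact: dhomogMn.
have [i0 _] : exists i0 : 'I_n, true.
  have hm := mlead_supp f0.
  have dm : mdeg (mlead f) = p by apply: (dhomog_mf hf).
  have : (0 < mdeg (mlead f))%N by rewrite dm.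
  by move=> /mdeg_pos_exists [i _]; exists i.
split.
  move=> a c a0 c0 hfe k.
  set N := (p * k)%N.
  have hk : f ^+ k = a ^+ k *: linf c ^+ N by rewrite hfe exprZn -exprM.
  have s0 : 0 <= \sum_i c i ^+ 2 by apply: sumr_ge0 => i _; exact: sqr_ge0.
  have l0 : 0 < l2norm c by rewrite /l2norm sqrtr_gt0 sumsq_gt0.
  have hsc : \sum_i c i ^+ 2 = l2norm c ^+ 2 by rewrite /l2norm sqr_sqrtr.
  have hs : hs_norm (f ^+ k) = `|a| ^+ k * l2norm c ^+ N.
    rewrite hs_normE hk (hsqZ _ _ _ (linfX_homog c N)) hsq_linfX sqrtrM ?sqr_ge0 //.
    by rewrite sqrtr_sqr normrX sqrtX.
  pose x := fun i => c i / l2norm c.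
  have hx : l2norm x = 1.
    rewrite /l2norm /x (_ : \sum_i (c i / l2norm c) ^+ 2 = 1) ?sqrtr1 //.
    under eq_bigr => i _ do rewrite expr_div_n.
    by rewrite -mulr_suml hsc divff // expf_neq0 // gt_eqF.
  have fx : `|(f ^+ k).@[x]| = `|a| ^+ k * l2norm c ^+ N.
    rewrite hk mevalZ rmorphXn /= meval_linf.
    have -> : \sum_i c i * x i = l2norm c.
      rewrite /x; under eq_bigr => i _ do rewrite mulrA -expr2.
      by rewrite -mulr_suml hsc expr2 mulfK // gt_eqF.
    by rewrite normrM !normrX (ger0_norm (ltW l0)).
  have sg : sigma_norm (f ^+ k) = `|a| ^+ k * l2norm c ^+ N.
    apply: sup_attained; first by exists x.
    by move=> y [z hz <-]; rewrite -hs; exact: eval_le_hs (hfk k) hz.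
  by split; [rewrite sg hs | rewrite sg /N mulnC].
move=> hnp.
pose a := fun k => hs_norm (f ^+ k).
have a0 : forall k, 0 < a k by move=> k; apply: hs_norm_gt0; exact: expf_neq0.
have asub : forall k l, a (k + l)%N <= a k * a l.
  by move=> k l; rewrite /a exprD; exact: hs_normM_le (hfk k) (hfk l).
have strict : forall k l, (0 < k)%N -> (0 < l)%N -> a (k + l)%N < a k * a l.
  move=> k l k0 l0; rewrite /a exprD !hs_normE -sqrtrM ?hsq_ge0 //.
  rewrite ltr_sqrt ?mulr_gt0 ?hsq_gt0 ?expf_neq0 //.
  rewrite lt_neqAle (hsqM_le _ _ _ _ (hfk k) (hfk l)) andbT; apply/negP => /eqP heq.
  have hsym := hsqM_eq _ _ _ _ (hfk k) (hfk l) heq.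
  have pl0 : (0 < p * l)%N by rewrite muln_gt0 p0.
  have [lam [u [u0 hu]]] := rank_one _ _ _ _ (hfk k) (hfk l) (expf_neq0 l f0) pl0 hsym.
  have [b [b0 hb]] := power_root _ _ _ _ _ k0 f0 u0 hu.
  by apply: hnp; exists b, u; split.
pose S := [set `|f.@[x]| | x in [set x : 'I_n -> R | l2norm x = 1]].
have Sne : S !=set0 by exists `|f.@[unit_vec i0]|; exists (unit_vec i0) => //; exact: l2norm_unit.
have elt_le : forall j, (0 < j)%N -> forall y, S y -> y <= sq a j.
  move=> j j0 y [x hx <-].
  rewrite -(le_sq _ a0) ?normr_ge0 // -normrX -rmorphXn.
  exact: eval_le_hs (hfk j) hx.
have sig_le : forall j, (0 < j)%N -> sigma_norm f <= sq a j.
  by move=> j j0; apply: ge_sup => //; exact: elt_le.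
have sig0 : 0 <= sigma_norm f.
  have hS : has_sup S by split => //; exists (sq a 1) => y Sy; exact: elt_le.
  have [y Sy] := Sne; apply: le_trans (sup_upper_bound hS Sy).
  by case: Sy => x _ <-.
have sigk : forall j, (0 < j)%N -> sigma_norm f ^+ j <= a j.
  by move=> j j0; rewrite (le_sq _ a0) // sig_le.
have sqlt : forall k, (0 < k)%N -> sq a (2 * k) < sq a k.
  move=> k k0; have k20 : (0 < 2 * k)%N by rewrite muln_gt0.
  rewrite -(ltr_pXn2r k20) ?nnegrE ?sq_ge0 // (sqK _ a0 k20) mulnC exprM (sqK _ a0 k0).
  by rewrite expr2 muln2 -addnn strict.
have hcvg := sq_cvg a a0 asub.
have hrho : rho1 f = Linf a by rewrite /rho1; exact: (cvg_lim _ hcvg).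
split; first exact: strict.
split.
  by move=> k k0; rewrite expr2 mul2n -addnn; exact: strict.
split.
  move=> k k0; rewrite -(ltr_pXn2r (isT : (0 < 2)%N)) ?nnegrE ?exprn_ge0 ?(ltW (a0 k)) //.
  rewrite -exprM mulnC; apply: le_lt_trans (sigk _ _) _; first by rewrite muln_gt0.
  by rewrite expr2 mul2n -addnn strict.
split; first exact: (cvgP _ hcvg).
split.
  rewrite hrho; apply: lb_le_inf; first by exists (sq a 1), 1%N.
  by move=> y [j j0 <-]; exact: sig_le.
move=> k k0; rewrite hrho; apply: le_lt_trans (Linf_le a (2 * k) _) (sqlt k k0).
by rewrite muln_gt0.
Qed.
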